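(* Let $w_1,b_1,w_2,b_2$ be the four vertices, in cyclic order, of a face of $\overline G$, where $w_1,w_2$ are white and $b_1,b_2$ black, and set $w_3=w_1$. Then $$(-1)\prod_{i=1}^2\frac{\overline\partial(w_i,b_i)}{\overline\partial(b_i,w_{i+1})}>0.$$
   Context: $G=(V,E)$ is an infinite connected graph properly embedded in the hyperbolic plane (unit disk) with every face bounded and finite, with weights $\nu(e)>0$; $G^+=(V^+,E^+)$ is its dual with weights $\nu(f)>0$; $e^+$ denotes the dual of $e$. The embedding places each dual vertex inside its face, draws edges as Euclidean segments, and makes each pair $e,e^+$ perpendicular. $\overline G$ is the bipartite graph with black vertices $V\cup V^+$ and white vertices the crossing points $e\cap e^+$, a white vertex adjacent to the endpoints of $e$ and of $e^+$ (so faces of $\overline G$ are quadrilaterals). The matrix $\overline\partial$ on vertices of $\overline G$: $\overline\partial(u,v)=0$ if $u,v$ not adjacent; for adjacent white $w$ and black $b$, with $f$ the edge of $G$ or $G^+$ having $b$ as an endpoint and containing $w$, $\overline\partial(w,b)=\overline\partial(b,w)=\nu(f)\frac{b-w}{|b-w|}$ (points as complex numbers). *)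

(* Defs.v *)
From HB Require Import structures.
From mathcomp Require Import all_boot all_order all_algebra.
From mathcomp Require Import complex.
From mathcomp Require Import all_classical all_reals all_analysis.
From Stdlib Require Import Relations.
Import numFieldNormedType.Exports numFieldTopology.Exports.
Import Order.TTheory GRing.Theory Num.Theory.

Set Implicit Arguments.
Unset Strict Implicit.
Unset Printing Implicit Defensive.

Local Open Scope ring_scope.
Local Open Scope classical_set_scope.

(* The complex plane, with its usual topology (the regular copy of R[i]). *)
Notation Cpl R := ((complex (Real.sort R))^o).

Section Defs.
Variable R : realType.

Definition segm (a b : Cpl R) : set (Cpl R) :=
  [set z | exists t : R, 0 <= t <= 1 /\ z = a + (t%:C)%C * (b - a)].

Definition osegm (a b : Cpl R) : set (Cpl R) :=
  [set z | exists t : R, 0 < t < 1 /\ z = a + (t%:C)%C * (b - a)].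

(* The hyperbolic plane: the open unit disk. *)
Definition disk : set (Cpl R) := [set z | `|z| < 1].

Definition perp (a b : Cpl R) : Prop := complex.Re (a * conjc b) = 0.

Definition is_face (D : set (Cpl R)) (Phi : set (Cpl R)) : Prop :=
  exists z, (disk `\` D) z /\ Phi = connected_component (disk `\` D) z.

Definition bdry (Phi : set (Cpl R)) : set (Cpl R) := closure Phi `\` Phi.

(* Embedding data of G = (V,E) together with its dual G^+ = (V^+, E^+).
   Edges of G and of G^+ are both indexed by [E]: the dual edge of [e] is e^+. *)
Record embedding (V F E : eqType) := Embedding {
  vpos  : V -> Cpl R;
  fpos  : F -> Cpl R;          (* position of a vertex of G^+ (a face of G) *)
  src   : E -> V;  tgt  : E -> V;
  dsrc  : E -> F;  dtgt : E -> F;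
  cross : E -> Cpl R;          (* the crossing point e \cap e^+ *)
  nu    : E -> R;
  nud   : E -> R
}.

Variables (V F E : eqType) (G : embedding V F E).

Definition eseg (e : E) := segm (vpos G (src G e)) (vpos G (tgt G e)).
Definition dseg (e : E) := segm (fpos G (dsrc G e)) (fpos G (dtgt G e)).

Definition drawG : set (Cpl R) := \bigcup_(e in [set: E]) eseg e.
Definition drawD : set (Cpl R) := \bigcup_(e in [set: E]) dseg e.
Definition drawGbar : set (Cpl R) := drawG `|` drawD.

Definition adjG (u v : V) : Prop :=
  exists e, (src G e = u /\ tgt G e = v) \/ (src G e = v /\ tgt G e = u).

Definition locally_finite (S : E -> set (Cpl R)) : Prop :=
  forall z, disk z -> exists2 r : R, 0 < r &
    finite_set [set e | S e `&` ball z ((r%:C)%C) !=set0].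

Record admissible : Prop := Admissible {
  adm_infinite : ~ finite_set [set: V];
  adm_connected : forall u v : V, clos_refl_trans V adjG u v;
  adm_nu_pos : forall e, 0 < nu G e;
  adm_nud_pos : forall e, 0 < nud G e;
  adm_vpos_disk : forall v, disk (vpos G v);
  adm_fpos_disk : forall f, disk (fpos G f);
  adm_vpos_inj : injective (vpos G);
  adm_fpos_inj : injective (fpos G);
  adm_vf_disj : forall v f, vpos G v <> fpos G f;
  adm_noloop : forall e, src G e <> tgt G e;
  adm_dnoloop : forall e, dsrc G e <> dtgt G e;
  adm_locfin : locally_finite eseg;
  adm_dlocfin : locally_finite dseg;
  adm_G_proper : forall e e', e <> e' ->
    eseg e `&` eseg e' `<=`
      [set vpos G v | v in [set v | (v == src G e) || (v == tgt G e)]]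
      `&` [set vpos G v | v in [set v | (v == src G e') || (v == tgt G e')]];
  adm_D_proper : forall e e', e <> e' ->
    dseg e `&` dseg e' `<=`
      [set fpos G f | f in [set f | (f == dsrc G e) || (f == dtgt G e)]]
      `&` [set fpos G f | f in [set f | (f == dsrc G e') || (f == dtgt G e')]];
  adm_vpos_off : forall v e, eseg e (vpos G v) -> v = src G e \/ v = tgt G e;
  adm_fpos_off : forall f e, dseg e (fpos G f) -> f = dsrc G e \/ f = dtgt G e;
  (* e^+ meets only e, exactly at the white vertex, interior to both *)
  adm_cross_other : forall e e', e <> e' -> eseg e `&` dseg e' = set0;
  adm_cross : forall e, eseg e `&` dseg e = [set cross G e];
  adm_cross_int : forall e,
    osegm (vpos G (src G e)) (vpos G (tgt G e)) (cross G e) /\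
    osegm (fpos G (dsrc G e)) (fpos G (dtgt G e)) (cross G e);
  adm_perp : forall e, perp (vpos G (tgt G e) - vpos G (src G e))
                            (fpos G (dtgt G e) - fpos G (dsrc G e));
  (* V^+ is the set of faces of G: each dual vertex lies inside its own face,
     and every face of G contains exactly one dual vertex *)
  adm_fpos_face : forall f, ~ drawG (fpos G f);
  adm_faces_dual : forall Phi, is_face drawG Phi ->
    exists! f, Phi (fpos G f);
  adm_face_bdd : forall Phi, is_face drawG Phi ->
    compact (closure Phi) /\ closure Phi `<=` disk;
  adm_face_fin : forall Phi, is_face drawG Phi ->
    finite_set [set e | eseg e `&` bdry Phi !=set0]
}.

(* Vertices of Gbar: white vertices (indexed by E) and black ones (V + F). *)
Inductive gvert := White of E | Black of (V + F).

Definition bpos (b : V + F) : Cpl R :=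
  match b with inl v => vpos G v | inr f => fpos G f end.

Definition gpos (u : gvert) : Cpl R :=
  match u with White e => cross G e | Black b => bpos b end.

Definition wb_adj (e : E) (b : V + F) : bool :=
  match b with
  | inl v => (v == src G e) || (v == tgt G e)
  | inr f => (f == dsrc G e) || (f == dtgt G e)
  end.

Definition wb_weight (e : E) (b : V + F) : R :=
  match b with inl _ => nu G e | inr _ => nud G e end.

Definition dbar_wb (e : E) (b : V + F) : Cpl R :=
  if wb_adj e b then
    ((wb_weight e b)%:C)%C * (bpos b - cross G e) / `|bpos b - cross G e|
  else 0.

Definition dbar (u v : gvert) : Cpl R :=
  match u, v with
  | White e, Black b => dbar_wb e b
  | Black b, White e => dbar_wb e b
  | _, _ => 0
  end.

Definition gbar_face (e1 : E) (b1 : V + F) (e2 : E) (b2 : V + F) : Prop :=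
  [/\ wb_adj e1 b1, wb_adj e2 b1, wb_adj e2 b2 & wb_adj e1 b2] /\
  e1 <> e2 /\ b1 <> b2 /\
      (exists Phi, is_face drawGbar Phi /\
        bdry Phi = segm (cross G e1) (bpos b1) `|` segm (bpos b1) (cross G e2)
                   `|` segm (cross G e2) (bpos b2) `|` segm (bpos b2) (cross G e1)).

End Defs.

Arguments White {V F E} e.
Arguments Black {V F E} b.

(* Main.v *)
Require Import Defs.
From HB Require Import structures.
From mathcomp Require Import all_boot all_order all_algebra.
From mathcomp Require Import complex.
From mathcomp Require Import all_classical all_reals all_analysis.
From mathcomp Require Import ring lra.
Import numFieldNormedType.Exports numFieldTopology.Exports.
Import Order.TTheory GRing.Theory Num.Theory.
Local Open Scope ring_scope.
Set Implicit Arguments. Unset Strict Implicit.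
Local Open Scope complex_scope.
Lemma geomR (R : realType) (p1 p2 q1 q2 z1 z2 : R) :
  0 < p1^+2 + p2^+2 -> 0 < q1^+2 + q2^+2 -> p1*q1 + p2*q2 = 0 ->
  (p1 - z1)*(q1 - z1) + (p2 - z2)*(q2 - z2) = 0 ->
  0 <= (p1*q2 - p2*q1) * ((p1 - z1)*(q2 - z2) - (p2 - z2)*(q1 - z1)) ->
  (exists mu la : R, [/\ 0 <= mu <= 1, 0 <= la <= 1,
      mu * p1 = z1 + la * (q1 - z1) & mu * p2 = z2 + la * (q2 - z2)]) \/
  (exists mu la : R, [/\ 0 <= mu <= 1, 0 <= la <= 1,
      mu * q1 = z1 + la * (p1 - z1) & mu * q2 = z2 + la * (p2 - z2)]).
Proof.
move=> nP nQ s0 hperp hsg.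
set D := p1*q2 - p2*q1.
have hD2 : D^+2 = (p1^+2 + p2^+2) * (q1^+2 + q2^+2).
  have -> : (p1^+2 + p2^+2) * (q1^+2 + q2^+2) = D^+2 + (p1*q1 + p2*q2)^+2 by rewrite /D; ring.
  by rewrite s0 expr0n /= addr0.
have D0 : D != 0.
  apply/negP => /eqP D0; move: hD2; rewrite D0 expr0n /= => /esym/eqP.
  by rewrite mulf_eq0 !gt_eqF.
set a := z1*q2 - z2*q1.
set b := p1*z2 - p2*z1.
set al := a / D. set be := b / D.
have ez1 : z1 = al * p1 + be * q1 by rewrite /al /be /a /b /D; field.
have ez2 : z2 = al * p2 + be * q2 by rewrite /al /be /a /b /D; field.
set nP2 := p1^+2 + p2^+2. set nQ2 := q1^+2 + q2^+2.
have key : al * (al - 1) * nP2 + be * (be - 1) * nQ2 = 0.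
  have : (p1 - z1)*(q1 - z1) + (p2 - z2)*(q2 - z2) =
     al * (al - 1) * nP2 + be * (be - 1) * nQ2 + (p1*q1 + p2*q2) * (1 - al - be + 2 * al * be).
    by rewrite ez1 ez2 /nP2 /nQ2; ring.
  by rewrite hperp s0 mul0r addr0 => <-.
have hs : 0 <= 1 - al - be.
  have : D * ((p1 - z1)*(q2 - z2) - (p2 - z2)*(q1 - z1)) = D^+2 * (1 - al - be).
    by rewrite /al /be /a /b /D; field.
  move=> e; move: hsg; rewrite e.
  by rewrite pmulr_rge0 // exprn_even_gt0.
case: (lerP be 0) => hbe.
- have hal : 0 <= al <= 1.
    have : 0 <= be * (be - 1) * nQ2 by apply: mulr_ge0 => //; [nra | exact: ltW].
    move=> h; have : al * (al - 1) * nP2 <= 0 by lra.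
    rewrite pmulr_lle0 // => h2; apply/andP; split; nra.
  left; exists (al / (1 - be)), (- be / (1 - be)).
  have nb : 1 - be != 0 by apply/lt0r_neq0 => /=; lra.
  split.
  + apply/andP; split; [apply: divr_ge0; lra|].
    by rewrite ler_pdivrMr ?mul1r; lra.
  + apply/andP; split; [apply: divr_ge0; lra|].
    by rewrite ler_pdivrMr ?mul1r; lra.
  + by rewrite ez1; field.
  + by rewrite ez2; field.
- have hal : al <= 0.
    rewrite leNgt; apply/negP => ha.
    have h1 : al * (al - 1) < 0 by nra.
    have h2 : be * (be - 1) < 0 by nra.
    have h3 : al * (al - 1) * nP2 < 0 by rewrite pmulr_llt0.
    have h4 : be * (be - 1) * nQ2 < 0 by rewrite pmulr_llt0.
    lra.
  have hb1 : be <= 1.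
    have : 0 <= al * (al - 1) * nP2 by apply: mulr_ge0 => //; [nra | exact: ltW].
    move=> h; have : be * (be - 1) * nQ2 <= 0 by lra.
    rewrite pmulr_lle0 // => h2; nra.
  right; exists (be / (1 - al)), (- al / (1 - al)).
  have nb : 1 - al != 0 by apply/lt0r_neq0 => /=; lra.
  split.
  + apply/andP; split; [apply: divr_ge0; lra|].
    by rewrite ler_pdivrMr ?mul1r; lra.
  + apply/andP; split; [apply: divr_ge0; lra|].
    by rewrite ler_pdivrMr ?mul1r; lra.
  + by rewrite ez1; field.
  + by rewrite ez2; field.
Qed.
Lemma nz_sq (R : realType) (a b : R) : (a +i* b : Cpl R) != 0 -> (0 < a^+2 + b^+2)%R.
Proof.
rewrite eq_complex /= negb_and => /orP [] h.
  by apply: ltr_pwDl; [rewrite exprn_even_gt0 | apply: sqr_ge0].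
by apply: ltr_pwDr; [rewrite exprn_even_gt0 | apply: sqr_ge0].
Qed.

Definition N2 (R : realType) (z : Cpl R) : R := (complex.Re z ^+ 2 + complex.Im z ^+ 2)%R.

Lemma N2_gt0 (R : realType) (z : Cpl R) : z != 0 -> (0 < N2 z)%R.
Proof. by case: z => a b /nz_sq. Qed.

Lemma normC_pos (R : realType) (z : Cpl R) : z != 0 -> exists2 n : R, (0 < n)%R & `|z| = n%:C.
Proof.
move=> nz; rewrite normc_def; exists (Num.sqrt (N2 z)) => //.
by rewrite sqrtr_gt0 N2_gt0.
Qed.

Lemma mulJ (R : realType) (z : Cpl R) : z * conjc z = (N2 z)%:C.
Proof. case: z => a b; apply/eqP; rewrite eq_complex /N2 /=; apply/andP; split; apply/eqP; ring. Qed.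

Lemma reim (R : realType) (z : Cpl R) : z = complex.Re z +i* complex.Im z.
Proof. by case: z. Qed.

Lemma algC (R : realType) (k1 k2 k3 k4 : R) (P1 P2 Q1 Q2 : Cpl R) :
  (0 < k1)%R -> (0 < k2)%R -> (0 < k3)%R -> (0 < k4)%R ->
  P1 != 0 -> P2 != 0 -> Q1 != 0 -> Q2 != 0 ->
  complex.Re (P1 * conjc Q1) = 0 -> complex.Re (P2 * conjc Q2) = 0 ->
  (complex.Im (P1 * conjc Q1) * complex.Im (P2 * conjc Q2) < 0)%R ->
  0 < - ((k1%:C * P1 / `|P1|) / (k2%:C * P2 / `|P2|) *
         ((k3%:C * Q2 / `|Q2|) / (k4%:C * Q1 / `|Q1|))).
Proof.
move=> k1p k2p k3p k4p nP1 nP2 nQ1 nQ2 r1 r2 hs.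
set s1 := complex.Im (P1 * conjc Q1). set s2 := complex.Im (P2 * conjc Q2).
have A1 : P1 * conjc Q1 = 0 +i* s1 by rewrite [LHS]reim r1.
have A2 : conjc P2 * Q2 = 0 +i* (- s2)%R.
  have -> : conjc P2 * Q2 = conjc (P2 * conjc Q2) by rewrite rmorphM /= conjcK mulrC.
  by rewrite [P2 * _]reim r2.
have I : P1 * Q2 * (N2 P2)%:C * (N2 Q1)%:C = (s1 * s2)%R%:C * (P2 * Q1).
  rewrite -!mulJ.
  have -> : P1 * Q2 * (P2 * conjc P2) * (Q1 * conjc Q1) =
            (P1 * conjc Q1) * (conjc P2 * Q2) * (P2 * Q1) by ring.
  rewrite A1 A2; congr (_ * _); apply/eqP; rewrite eq_complex /=; apply/andP; split; apply/eqP; ring.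
have [n1 n1p ->] := normC_pos nP1.
have [n2 n2p ->] := normC_pos nP2.
have [n3 n3p ->] := normC_pos nQ2.
have [n4 n4p ->] := normC_pos nQ1.
have N2p := N2_gt0 nP2. have N1p := N2_gt0 nQ1.
have nz : forall x : R, (0 < x)%R -> x%:C != 0 :> Cpl R.
  by move=> x hx; rewrite fmorph_eq0 gt_eqF.
set r := ((k1 * k3 * n2 * n4) / (k2 * k4 * n1 * n3) * (- (s1 * s2)) / (N2 P2 * N2 Q1))%R.
have rp : (0 < r)%R.
  rewrite /r; apply: divr_gt0; last by apply: mulr_gt0.
  apply: mulr_gt0; last by lra.
  apply: divr_gt0; by repeat apply: mulr_gt0.
suff -> : - ((k1%:C * P1 / n1%:C) / (k2%:C * P2 / n2%:C) *
         ((k3%:C * Q2 / n3%:C) / (k4%:C * Q1 / n4%:C))) = r%:C.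
  by rewrite ltcE /= eqxx.
have eP1 : P1 = (s1 * s2)%R%:C * (P2 * Q1) / (Q2 * (N2 P2)%:C * (N2 Q1)%:C).
  rewrite -I; field.
  by repeat (apply/andP; split); try (apply: nz; done).
rewrite eP1 /r !(rmorphM, rmorphN, fmorphV) /=.
field.
by repeat (apply/andP; split); try (apply: nz; done).
Qed.
Lemma geomC (R : realType) (w1 w2 v f : Cpl R) :
  v - w1 != 0 -> f - w1 != 0 ->
  complex.Re ((v - w1) * conjc (f - w1)) = 0 ->
  complex.Re ((v - w2) * conjc (f - w2)) = 0 ->
  (0 <= complex.Im ((v - w1) * conjc (f - w1)) * complex.Im ((v - w2) * conjc (f - w2)))%R ->
  (exists mu la : R, [/\ (0 <= mu <= 1)%R, (0 <= la <= 1)%R &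
      w1 + mu%:C * (v - w1) = w2 + la%:C * (f - w2)]) \/
  (exists mu la : R, [/\ (0 <= mu <= 1)%R, (0 <= la <= 1)%R &
      w1 + mu%:C * (f - w1) = w2 + la%:C * (v - w2)]).
Proof.
have -> : v = w1 + (v - w1) by rewrite addrC subrK.
have -> : f = w1 + (f - w1) by rewrite addrC subrK.
have -> : w2 = w1 + (w2 - w1) by rewrite addrC subrK.
rewrite !(addrC w1) !addrK.
have E : forall x y : Cpl R, x + w1 - (y + w1) = x - y.
  by move=> x y; rewrite opprD addrACA subrr addr0.
rewrite !E.
move: (v - w1) (f - w1) (w2 - w1) => [p1 p2] [q1 q2] [z1 z2].
move=> /nz_sq nP /nz_sq nQ /= h1 h2 h3.
have := @geomR R p1 p2 q1 q2 z1 z2 nP nQ.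
have -> : (p1 * q1 + p2 * q2 = p1 * q1 - p2 * - q2)%R by ring.
move=> /(_ h1).
have -> : ((p1 - z1) * (q1 - z1) + (p2 - z2) * (q2 - z2) =
   (p1 - z1) * (q1 - z1) - (p2 - z2) * - (q2 - z2))%R by ring.
move=> /(_ h2).
have -> : ((p1 * q2 - p2 * q1) * ((p1 - z1) * (q2 - z2) - (p2 - z2) * (q1 - z1)) =
  (p1 * - q2 + p2 * q1) * ((p1 - z1) * - (q2 - z2) + (p2 - z2) * (q1 - z1)))%R by ring.
move=> /(_ h3) [[mu [la [hm hl e1 e2]]]|[mu [la [hm hl e1 e2]]]]; [left|right];
  exists mu, la; split => //; rewrite (addrC _ w1) -addrA; congr (w1 + _);
  apply/eqP; rewrite eq_complex /= !mul0r !subr0 !addr0 e1 e2 !eqxx //.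
Qed.
Lemma seg_data (R : realType) (a b w x : Cpl R) : b != a -> osegm a b w -> (x = a \/ x = b) ->
  exists c : R, [/\ c != 0, x - w = c%:C * (b - a) &
    forall mu : R, (0 <= mu <= 1)%R -> segm a b (w + mu%:C * (x - w))].
Proof.
move=> nab [t [/andP [t0 t1] ->]] hx.
have [s [hs ->]] : exists s : R, (s = 0 \/ s = 1) /\ x = a + s%:C * (b - a).
  case: hx => ->; [exists 0 | exists 1]; split; auto.
  - by rewrite mul0r addr0.
  - by rewrite mul1r addrC subrK.
exists (s - t)%R; split.
- by case: hs => ->; apply/eqP; lra.
- by rewrite rmorphB /=; ring.
- move=> mu /andP [m0 m1]; exists (t + mu * (s - t))%R; split.
    by case: hs => ->; apply/andP; split; nra.
  by rewrite !rmorphD !rmorphM !rmorphB /=; ring.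
Qed.
Section Main.
Variables (R : realType) (V F E : eqType) (G : embedding R V F E) (HG : admissible G).

Lemma vdata e v : wb_adj G e (inl v) ->
  exists c : R, [/\ c != 0, vpos G v - cross G e = c%:C * (vpos G (tgt G e) - vpos G (src G e)) &
    forall mu : R, (0 <= mu <= 1)%R -> eseg G e (cross G e + mu%:C * (vpos G v - cross G e))].
Proof.
move=> h; apply: seg_data.
- by apply/eqP => /(adm_vpos_inj HG) /esym; apply: (adm_noloop HG).
- exact: (adm_cross_int HG e).1.
- by case/orP: h => /eqP ->; [left|right].
Qed.

Lemma fdata e f : wb_adj G e (inr f) ->
  exists c : R, [/\ c != 0, fpos G f - cross G e = c%:C * (fpos G (dtgt G e) - fpos G (dsrc G e)) &
    forall mu : R, (0 <= mu <= 1)%R -> dseg G e (cross G e + mu%:C * (fpos G f - cross G e))].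
Proof.
move=> h; apply: seg_data.
- by apply/eqP => /(adm_fpos_inj HG) /esym; apply: (adm_dnoloop HG).
- exact: (adm_cross_int HG e).2.
- by case/orP: h => /eqP ->; [left|right].
Qed.

Lemma noint e e' z : e <> e' -> eseg G e z -> dseg G e' z -> False.
Proof.
move=> ne h1 h2; have : (eseg G e `&` dseg G e')%classic z by split.
by rewrite (adm_cross_other HG ne).
Qed.


Lemma perpRe (c c' : R) (B D : Cpl R) :
  complex.Re ((c%:C * B) * conjc (c'%:C * D)) = (c * c' * complex.Re (B * conjc D))%R.
Proof. case: B D => [x y] [u w] /=; ring. Qed.

Lemma core e1 e2 v f : e1 <> e2 ->
  wb_adj G e1 (inl v) -> wb_adj G e2 (inl v) -> wb_adj G e1 (inr f) -> wb_adj G e2 (inr f) ->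
  [/\ vpos G v - cross G e1 != 0, vpos G v - cross G e2 != 0,
      fpos G f - cross G e1 != 0, fpos G f - cross G e2 != 0 &
   [/\ complex.Re ((vpos G v - cross G e1) * conjc (fpos G f - cross G e1)) = 0,
       complex.Re ((vpos G v - cross G e2) * conjc (fpos G f - cross G e2)) = 0 &
       (complex.Im ((vpos G v - cross G e1) * conjc (fpos G f - cross G e1)) *
        complex.Im ((vpos G v - cross G e2) * conjc (fpos G f - cross G e2)) < 0)%R]].
Proof.
move=> ne h1 h2 h3 h4.
have [c1 [c1n ev1 sv1]] := vdata h1.
have [c2 [c2n ev2 sv2]] := vdata h2.
have [d1 [d1n ef1 sf1]] := fdata h3.
have [d2 [d2n ef2 sf2]] := fdata h4.
have nzv : forall e, vpos G (tgt G e) - vpos G (src G e) != 0.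
  by move=> e; rewrite subr_eq0; apply/eqP => /(adm_vpos_inj HG)/esym; apply: (adm_noloop HG).
have nzf : forall e, fpos G (dtgt G e) - fpos G (dsrc G e) != 0.
  by move=> e; rewrite subr_eq0; apply/eqP => /(adm_fpos_inj HG)/esym; apply: (adm_dnoloop HG).
have nzc : forall (c : R) (B : Cpl R), c != 0 -> B != 0 -> c%:C * B != 0.
  by move=> c B hc hB; rewrite mulf_neq0 // fmorph_eq0.
have n1 : vpos G v - cross G e1 != 0 by rewrite ev1 nzc.
have n2 : vpos G v - cross G e2 != 0 by rewrite ev2 nzc.
have n3 : fpos G f - cross G e1 != 0 by rewrite ef1 nzc.
have n4 : fpos G f - cross G e2 != 0 by rewrite ef2 nzc.
have r1 : complex.Re ((vpos G v - cross G e1) * conjc (fpos G f - cross G e1)) = 0.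
  by rewrite ev1 ef1 perpRe (adm_perp HG) mulr0.
have r2 : complex.Re ((vpos G v - cross G e2) * conjc (fpos G f - cross G e2)) = 0.
  by rewrite ev2 ef2 perpRe (adm_perp HG) mulr0.
split => //; split => //.
rewrite ltNge; apply/negP => hge.
case: (geomC n1 n3 r1 r2 hge) => [[mu [la [hm hl eq]]]|[mu [la [hm hl eq]]]].
- apply: (noint ne (sv1 _ hm)); rewrite eq; exact: sf2.
- apply: (noint (nesym ne) (sv2 _ hl)); rewrite -eq; exact: sf1.
Qed.


Lemma ends (T : eqType) (x y s t : T) : x != y -> (x == s) || (x == t) -> (y == s) || (y == t) ->
  (s = x /\ t = y) \/ (s = y /\ t = x).
Proof.
move=> nxy /orP [] /eqP hx /orP [] /eqP hy; subst.
- by rewrite eqxx in nxy.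
- by left.
- by right.
- by rewrite eqxx in nxy.
Qed.

Lemma seg_ends (a b a' b' z : Cpl R) : ((a' = a /\ b' = b) \/ (a' = b /\ b' = a)) ->
  osegm a' b' z -> segm a b z.
Proof.
case => [[-> ->]|[-> ->]] [t [/andP [t0 t1] ->]].
- by exists t; split => //; apply/andP; split; lra.
- exists (1 - t)%R; split; first by apply/andP; split; lra.
  by rewrite rmorphB /=; ring.
Qed.

Lemma cross_d e : dseg G e (cross G e).
Proof.
have : (eseg G e `&` dseg G e)%classic (cross G e) by rewrite (adm_cross HG).
by case.
Qed.

Lemma cross_e e : eseg G e (cross G e).
Proof.
have : (eseg G e `&` dseg G e)%classic (cross G e) by rewrite (adm_cross HG).
by case.
Qed.

Lemma vv_contra e1 e2 v1 v2 : e1 <> e2 -> v1 != v2 ->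
  wb_adj G e1 (inl v1) -> wb_adj G e2 (inl v1) -> wb_adj G e2 (inl v2) -> wb_adj G e1 (inl v2) -> False.
Proof.
move=> ne nv h1 h2 h3 h4.
have H1 := ends nv h1 h4. have H2 := ends nv h2 h3.
apply: (noint ne _ (cross_d e2)).
apply: (seg_ends _ (adm_cross_int HG e2).1).
by case: H1 H2 => [[-> ->]|[-> ->]] [[-> ->]|[-> ->]]; [left|right|right|left].
Qed.

Lemma ff_contra e1 e2 f1 f2 : e1 <> e2 -> f1 != f2 ->
  wb_adj G e1 (inr f1) -> wb_adj G e2 (inr f1) -> wb_adj G e2 (inr f2) -> wb_adj G e1 (inr f2) -> False.
Proof.
move=> ne nv h1 h2 h3 h4.
have H1 := ends nv h1 h4. have H2 := ends nv h2 h3.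
apply: (noint ne (cross_e e1)).
apply: (seg_ends _ (adm_cross_int HG e1).2).
by case: H1 H2 => [[-> ->]|[-> ->]] [[-> ->]|[-> ->]]; [left|right|right|left].
Qed.

End Main.

Lemma ReJC (R : realType) (x y : Cpl R) : complex.Re (x * conjc y) = complex.Re (y * conjc x).
Proof. case: x y => [a b] [c d] /=; ring. Qed.
Lemma ImJC (R : realType) (x y : Cpl R) : complex.Im (x * conjc y) = (- complex.Im (y * conjc x))%R.
Proof. case: x y => [a b] [c d] /=; ring. Qed.

Unset Implicit Arguments.
Close Scope complex_scope.

Theorem lemma2p5 (R : realType) (V F E : eqType) (G : embedding R V F E)
  (HG : admissible G) (e1 e2 : E) (b1 b2 : V + F) :
  gbar_face G e1 b1 e2 b2 ->
  0 < - ((dbar G (White e1) (Black b1) / dbar G (Black b1) (White e2)) *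
         (dbar G (White e2) (Black b2) / dbar G (Black b2) (White e1))).
Proof.
move=> [[h1 h2 h3 h4] [ne [nb _]]].
case: b1 b2 h1 h2 h3 h4 nb => [v1|f1] [v2|f2] h1 h2 h3 h4 nb.
- exfalso; apply: (vv_contra HG ne _ h1 h2 h3 h4).
  by apply/eqP => e; apply: nb; rewrite e.
- have [n1 n2 n3 n4 [r1 r2 s]] := core HG ne h1 h2 h4 h3.
  rewrite /= /dbar_wb h1 h2 h3 h4 /=.
  apply: algC => //; by [apply: (adm_nu_pos HG) | apply: (adm_nud_pos HG)].
- have [n1 n2 n3 n4 [r1 r2 s]] := core HG ne h4 h3 h1 h2.
  rewrite /= /dbar_wb h1 h2 h3 h4 /=.
  apply: algC => //; try by [apply: (adm_nu_pos HG) | apply: (adm_nud_pos HG)].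
  + by rewrite ReJC.
  + by rewrite ReJC.
  + by rewrite ImJC (ImJC (fpos G f1 - _)) mulrNN.
- exfalso; apply: (ff_contra HG ne _ h1 h2 h3 h4).
  by apply/eqP => e; apply: nb; rewrite e.
Qed.
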